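(* Let $X$ be a Banach space of analytic functions on $\mathbb{U}$ such that the sequence $\{u_n\}$, $u_n(z)=z^n$, is contained in and bounded in $X$, and let $E\hookrightarrow\ell_\infty$ be a Banach sequence lattice. Let $\lambda=\{\lambda_n\}$ be such that the multiplier operator $M_\lambda\colon X\to E$, $M_\lambda f=\{\lambda_n\hat f(n)\}$, is defined. If $M_\lambda\colon X\to E$ is compact, then \[\limsup_{n\to\infty}|\lambda_n|=0.\]
   Context: $\mathbb{U}$ is the open unit disk and $f=\sum_{n\ge0}\hat f(n)u_n$ the Taylor expansion; ''$\hookrightarrow$'' denotes continuous inclusion. A Banach sequence lattice on $\mathbb{Z}_+$ is a Banach space $E$ of sequences with $|y_n|\le|x_n|$ for all $n$, $x\in E$ implying $y\in E$ and $\|y\|_E\le\|x\|_E$. *)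

(* Defs.v *)
From HB Require Import structures.
From mathcomp Require Import all_boot all_order all_algebra.
From mathcomp Require Import complex.
From mathcomp Require Import all_classical all_reals all_analysis.
Import Order.TTheory GRing.Theory Num.Theory.
Import numFieldTopology.Exports numFieldNormedType.Exports.

Set Implicit Arguments.
Unset Strict Implicit.
Unset Printing Implicit Defensive.

Local Open Scope classical_set_scope.
Local Open Scope ring_scope.

HB.instance Definition _ (R : rcfType) := PseudoPointedMetric.copy R[i] R[i]^o.
HB.instance Definition _ (R : rcfType) := NormedModule.copy R[i] R[i]^o.

Definition unit_disk (R : realType) : set R[i] := [set z | `|z| < 1].

Definition analytic_on_disk (R : realType) (f : R[i] -> R[i]) : Prop :=
  exists a : nat -> R[i], forall z, @unit_disk R z ->
    series (fun n => a n * z ^+ n) @ \oo --> f z.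

(* Taylor coefficients \hat f(n) of a function analytic on U (the coefficients
   of a power series representing f on U; these are unique).  Junk value 0 if
   f is not analytic on U. *)
Definition taylor_coef (R : realType) (f : R[i] -> R[i]) (n : nat) : R[i] :=
  match pselect (analytic_on_disk f) with
  | left H => sval (cid H) n
  | right _ => 0
  end.

(* X (a complete normed space over C) is a Banach space of analytic functions on U:
   its elements are realised, via iota, as analytic functions on U, with the
   pointwise vector operations, and distinct elements are distinct functions. *)
Definition banach_space_of_analytic_functions (R : realType)
    (X : completeNormedModType R[i]) (iota : X -> R[i] -> R[i]) : Prop :=
  [/\ forall (a : R[i]) (f g : X) z, @unit_disk R z ->
        iota (a *: f + g) z = a * iota f z + iota g z,
      forall f g : X, (forall z, @unit_disk R z -> iota f z = iota g z) -> f = g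
    & forall f : X, analytic_on_disk (iota f)].

(* E (a complete normed space over C) is a Banach sequence lattice on Z_+:
   its elements are realised, via j, as complex sequences (pointwise vector
   operations, injective), and the lattice (solidity) property holds. *)
Definition banach_sequence_lattice (R : realType)
    (E : completeNormedModType R[i]) (j : E -> nat -> R[i]) : Prop :=
  [/\ forall (a : R[i]) (x y : E) n, j (a *: x + y) n = a * j x n + j y n,
      injective j
    & forall (x : E) (y : nat -> R[i]), (forall n, `|y n| <= `|j x n|) ->
        exists y' : E, j y' = y /\ `|y'| <= `|x| ].

(* E \hookrightarrow \ell_\infty : continuous inclusion into bounded sequences. *)
Definition embeds_in_linfty (R : realType)
    (E : completeNormedModType R[i]) (j : E -> nat -> R[i]) : Prop :=
  exists c : R[i], 0 < c /\ forall (x : E) n, `|j x n| <= c * `|x|.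

Definition compact_operator (R : realType) (X Y : normedModType R[i])
    (T : X -> Y) : Prop :=
  forall B : set X, bounded_set B -> compact (closure (T @` B)).

(* Main.v *)
Require Import Defs.
From HB Require Import structures.
From mathcomp Require Import all_boot all_order all_algebra.
From mathcomp Require Import complex.
From mathcomp Require Import all_classical all_reals all_analysis.
From mathcomp Require Import ring lra.
Import Order.TTheory GRing.Theory Num.Theory.
Import numFieldTopology.Exports numFieldNormedType.Exports.
Local Open Scope classical_set_scope.
Local Open Scope ring_scope.
Local Open Scope complex_scope.
Lemma normCE (R : realType) (x : R[i]) : `|x| = (Normc.normc x)%:C.
Proof. by []. Qed.
Lemma normc_real (R : realType) (t : R) : Normc.normc (t%:C) = `|t|.
Proof. by rewrite /Normc.normc /= expr0n /= addr0 sqrtr_sqr. Qed.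
Lemma normc_ge0 (R : realType) (x : R[i]) : 0 <= Normc.normc x.
Proof. by case: x => a b; rewrite /Normc.normc sqrtr_ge0. Qed.

Lemma term_bound (R : realType) (c : nat -> R[i]) :
  series (fun k => c k * ((2^-1 : R)%:C) ^+ k) @ \oo --> 0 ->
  exists B : R, 0 <= B /\ forall k, Normc.normc (c k) * (2^-1) ^+ k <= B.
Proof.
move=> /cvgP/cvg_series_cvg_0/cvgP/cvg_seq_bounded.
have PF := @globally_properfilter nat setT 0%N I.
move=> /ex_bound [M hM].
exists (complex.Re M); split.
  have := hM 0%N I; rewrite /= lecE => /andP[_]; apply: le_trans.
  exact: normc_ge0.
move=> k; have := hM k I; rewrite /= normCE lecE => /andP[_].
by rewrite Normc.normcM -rmorphXn normc_real ger0_norm // exprn_ge0 // invr_ge0.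
Qed.
Lemma partial_est (R : realType) (c : nat -> R[i]) (m : nat) (B t : R) :
  (forall k, (k < m)%N -> c k = 0) -> 0 <= B ->
  (forall k, Normc.normc (c k) * (2^-1) ^+ k <= B) ->
  0 <= t -> t <= 4^-1 ->
  forall d, Normc.normc (series (fun k => c k * t%:C ^+ k) (m.+1 + d)%N - c m * t%:C ^+ m)
     <= 2 * B * ((2*t) ^+ m.+1 - (2*t) ^+ (m.+1 + d)).
Proof.
move=> c0 B0 hB t0 t4; elim=> [|d IH].
  rewrite addn0 /series /= big_nat_recr //= big_mkord big1 ?add0r ?subrr.
    by rewrite Normc.normc0 mulr0.
  by move=> i _; rewrite c0 ?mul0r.
rewrite addnS /series /= big_nat_recr //=.
set S := \sum_(0 <= k < _) _ in IH *.
set N := (m.+1 + d)%N in IH *.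
have e1 : S + c N * t%:C ^+ N - c m * t%:C ^+ m = (S - c m * t%:C ^+ m) + c N * t%:C ^+ N.
  by rewrite addrAC.
rewrite e1; apply: le_trans (le_normcD _ _) _.
have e2 : Normc.normc (c N * t%:C ^+ N) = Normc.normc (c N) * (2^-1) ^+ N * (2 * t) ^+ N.
  rewrite Normc.normcM -rmorphXn normc_real ger0_norm ?exprn_ge0 //.
  by rewrite -mulrA -exprMn mulrA mulVf ?mul1r // pnatr_eq0.
rewrite e2.
have h1 : Normc.normc (c N) * (2^-1) ^+ N * (2 * t) ^+ N <= B * (2 * t) ^+ N.
  by rewrite ler_wpM2r // exprn_ge0 // mulr_ge0.
have qN0 : 0 <= (2 * t) ^+ N by rewrite exprn_ge0 // mulr_ge0.
have qS : (2 * t) ^+ N.+1 = (2 * t) * (2 * t) ^+ N by rewrite exprS.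
apply: le_trans (lerD IH h1) _.
rewrite qS; set q := 2 * t; set Q := q ^+ N; set P := q ^+ m.+1.
have q2 : q <= 2^-1 by rewrite /q; lra.
have BQ0 : 0 <= B * Q by rewrite mulr_ge0.
nra.
Qed.
Lemma coef_step (R : realType) (c : nat -> R[i]) (m : nat) :
  (forall t : R, 0 <= t -> t <= 2^-1 -> series (fun k => c k * t%:C ^+ k) @ \oo --> 0) ->
  (forall k, (k < m)%N -> c k = 0) -> c m = 0.
Proof.
move=> H c0.
have [B [B0 hB]] : exists B : R, 0 <= B /\ forall k, Normc.normc (c k) * (2^-1) ^+ k <= B.
  by apply: term_bound; apply: H => //; rewrite invr_ge0.
apply: Normc.eq0_normc.
set a := Normc.normc (c m).
have a0 : 0 <= a by apply: normc_ge0.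
have [//|ap] : a = 0 \/ 0 < a by rewrite le0r in a0; case/orP: a0 => [/eqP|]; [left|right].
exfalso.
set K : R := 2 ^+ m.+1.
have K0 : 0 < K by rewrite exprn_gt0.
set D := 4 * ((B + 1) * K + a).
have D0 : 0 < D by rewrite /D; nra.
set t := a / D.
have tD : t * D = a by rewrite /t mulfVK // gt_eqF.
have t0 : 0 < t by rewrite divr_gt0.
have t4 : t <= 4^-1 by rewrite /t ler_pdivrMr // /D; nra.
set T := t ^+ m.
have T0 : 0 < T by rewrite exprn_gt0.
have ep : 0 < (a * T / 2)%:C by rewrite ltcR; nra.
have t2 : t <= 2^-1 by lra.
have /cvgr_dist_lt /(_ _ ep) := H t (ltW t0) t2.
case => N0 _ hN0.
have := hN0 (m.+1 + N0)%N (leq_addl _ _).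
rewrite /= sub0r normrN normCE ltcR.
set S := series _ _ => hS.
have hE := @partial_est R c m B t c0 B0 hB (ltW t0) t4 N0.
rewrite -/S in hE.
have htri : Normc.normc (c m * t%:C ^+ m) <= Normc.normc S + Normc.normc (S - c m * t%:C ^+ m).
  by have := le_normcD S (-(S - c m * t%:C ^+ m)); rewrite normcN opprB addrC subrK.
have e1 : Normc.normc (c m * t%:C ^+ m) = a * T.
  by rewrite Normc.normcM -rmorphXn normc_real ger0_norm // exprn_ge0 // ltW.
have e2 : (2 * t) ^+ m.+1 = K * T * t.
  by rewrite exprMn [t ^+ _]exprSr mulrA.
have qn : 0 <= (2 * t) ^+ (m.+1 + N0) by rewrite exprn_ge0 // mulr_ge0 // ltW.
rewrite e1 e2 in htri hE.
have BQ : 0 <= 2 * B * (2 * t) ^+ (m.+1 + N0) by rewrite mulr_ge0 // mulr_ge0.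
have h3 : a * T < 4 * (B * K * t) * T by nra.
have h4 : a < 4 * (B * K * t).
  by rewrite -(ltr_pM2r T0).
have Kt : 0 < K * t by rewrite mulr_gt0.
have at0 : 0 < a * t by rewrite mulr_gt0.
move: tD; rewrite /D; nra.
Qed.
Lemma series_delta (R : realType) (z : R[i]) (n : nat) :
  series (fun k => (k == n)%:R * z ^+ k) @ \oo --> z ^+ n.
Proof.
apply: cvg_near_cst; exists n.+1 => // N /= nN.
rewrite /series /= big_mkord (bigD1 (Ordinal nN)) //= eqxx mul1r big1 ?addr0 //.
by move=> i /negbTE; rewrite -val_eqE /= => ->; rewrite mul0r.
Qed.

Lemma coef_unique (R : realType) (a : nat -> R[i]) (n : nat) :
  (forall z, @unit_disk R z -> series (fun k => a k * z ^+ k) @ \oo --> z ^+ n) ->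
  forall k, a k = (k == n)%:R.
Proof.
move=> H.
pose c := fun k => a k - (k == n)%:R.
suff: forall k, c k = 0.
  by move=> h k; apply/eqP; rewrite -subr_eq0; apply/eqP; exact: h.
have Hc : forall t : R, 0 <= t -> t <= 2^-1 ->
    series (fun k => c k * t%:C ^+ k) @ \oo --> 0.
  move=> t t0 t2.
  have D : unit_disk t%:C.
    by rewrite /unit_disk /= normCE normc_real ltcR ger0_norm //; lra.
  have -> : series (fun k => c k * t%:C ^+ k) =
      series (fun k => a k * t%:C ^+ k) - series (fun k => (k == n)%:R * t%:C ^+ k).
    apply/funext => N; rewrite /series /= !fctE -sumrB; apply: eq_bigr => k _.
    by rewrite /c mulrBl.
  rewrite -(subrr (t%:C ^+ n)); apply: cvgB; [exact: H | exact: series_delta].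
elim/ltn_ind => m IH; exact: coef_step Hc IH.
Qed.
Lemma half_contra (K : numFieldType) (n c d : K) :
  0 < n -> 0 < c -> n <= c * d -> d < n / (2 * c) -> False.
Proof.
move=> n0 c0 h1 h2.
have : c * d < c * (n / (2 * c)) by rewrite ltr_pM2l.
have e : c * (n / (2 * c)) = n / 2.
  by field; rewrite gt_eqF.
rewrite e => h3.
have := le_lt_trans h1 h3; rewrite ltr_pdivlMr // -{2}(mulr1 n) ltr_pM2l //.
by move=> h; have := lt_le_trans h (ler1n K 2); rewrite ltxx.
Qed.

Lemma limn_esup0 (R : realType) (v : nat -> R) : v @ \oo --> 0 -> limn_esup (fun n => (v n)%:E) = 0%E.
Proof.
move=> h.
have h2 : (fun n => (v n)%:E) @ \oo --> 0%E.
  by apply: cvg_EFin => //; exact: nearW.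
rewrite is_cvg_limn_esupE; last exact: cvgP h2.
exact: cvg_lim h2.
Qed.


Theorem proposition2p2 (R : realType)
    (X : completeNormedModType R[i]) (iota : X -> R[i] -> R[i])
    (u : nat -> X)
    (E : completeNormedModType R[i]) (j : E -> nat -> R[i])
    (lambda : nat -> R[i]) (M : X -> E) :
  banach_space_of_analytic_functions iota ->
  (forall n z, @unit_disk R z -> iota (u n) z = z ^+ n) ->
  bounded_set (range u) ->
  banach_sequence_lattice j ->
  embeds_in_linfty j ->
  (forall f n, j (M f) n = lambda n * taylor_coef (iota f) n) ->
  compact_operator M ->
  limn_esup (fun n => (Normc.normc (lambda n))%:E) = 0%E.
Proof.
move=> [iotaL iotaI iotaA] Hu ubd [jL jI jS] [c [c0 hc]] HM Mc.
have tc : forall n k, taylor_coef (iota (u n)) k = (k == n)%:R.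
  move=> n k; rewrite /taylor_coef; case: pselect => [Ha|/(_ (iotaA _))//].
  case: cid => a ha /=.
  apply: (@coef_unique R a n) => z zD; rewrite -(Hu n z zD); exact: ha z zD.
have jM : forall n m, j (M (u n)) m = lambda m * (m == n)%:R.
  by move=> n m; rewrite HM tc.
have j0 : forall m, j 0 m = 0.
  move=> m; have := jL 1 0 0 m; rewrite scale1r addr0 mul1r.
  by move=> /(congr1 (fun x => x - j 0 m)); rewrite subrr addrK.
have jB : forall x y m, j (x - y) m = j x m - j y m.
  move=> x y m; have := jL (-1) y x m; rewrite scaleN1r mulN1r => e.
  by rewrite [x - y]addrC e addrC.
apply: limn_esup0.
apply/cvgrPdist_lt => e e0.
apply: contrapT => nH.
have hinf : forall K, exists n, (K <= n)%N /\ e <= Normc.normc (lambda n).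
  move=> K; apply: contrapT => hK; apply: nH; exists K; first exact: I.
  move=> n /= Kn.
  rewrite sub0r normrN ger0_norm ?normc_ge0 // ltNge; apply/negP => le.
  by apply: hK; exists n.
case: (choice hinf) => phi hphi.
pose v k := M (u (phi k)).
have cpt := Mc _ ubd.
have Fcl : (v @ \oo) (closure (M @` range u)).
  exists 0%N; first exact: I.
  move=> k _ /=.
  by apply: subset_closure; exists (u (phi k)) => //; exists (phi k).
have [y [_ cly]] := cpt (v @ \oo) _ Fcl.
have key : forall m (eps : R[i]), 0 < eps -> exists k, (m <= k)%N /\ `|y - v k| < eps.
  move=> m eps ep.
  have FA : (v @ \oo) [set v k | k in [set k | (m <= k)%N]].
    by exists m; [exact: I | move=> k /= mk; exists k].
  have := cly _ _ FA (nbhsx_ballx y eps ep).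
  case => _ [[k mk <-] bk]; exists k; split => //.
  by move: bk; rewrite -ball_normE.
have two0 : (0 : R[i]) < 2 by rewrite ltr0n.
have jy0 : forall m, j y m = 0.
  move=> m; apply/eqP; apply: contraT => ne.
  have ny0 : 0 < `|j y m| by rewrite normr_gt0.
  have [k [mk hk]] := key m.+1 (`|j y m| / (2 * c)) (divr_gt0 ny0 (mulr_gt0 two0 c0)).
  have vk0 : j (v k) m = 0.
    by rewrite /v jM (ltn_eqF (leq_trans mk (hphi k).1)) mulr0.
  have := hc (y - v k) m; rewrite jB vk0 subr0 => h.
  by case: (@half_contra _ _ _ _ ny0 c0 h hk).
have y0 : y = 0 by apply: jI; apply/funext => m; rewrite jy0 j0.
have e0C : 0 < e%:C by rewrite ltcR.
have [k [_ hk]] := key 0%N (e%:C / (2 * c)) (divr_gt0 e0C (mulr_gt0 two0 c0)).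
move: hk; rewrite y0 sub0r normrN => hk.
have h := hc (v k) (phi k).
rewrite /v jM eqxx mulr1 in h.
have h' : e%:C <= c * `|v k|.
  by apply: le_trans h; rewrite normCE lecR; exact: (hphi k).2.
exact: (@half_contra _ _ _ _ e0C c0 h' hk).
Qed.
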